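(* Let $\lambda\in(0,\tfrac12)$ and let $G$ be a finite simple connected graph with $n$ vertices. Then $$mc^{e}_{\lambda}(G)\le (n-1)\lambda,$$ and equality holds for the complete graph $K_n$ (at any of its vertices).
   Context: $d(u,v)$ denotes graph distance and $[u]$ the set of neighbours of $u$. For vertices $k,l$, $s^{kl}$ is the number of shortest $k$–$l$ paths and, for an edge $uv$, $s^{kl}_{uv}$ is the number of those passing through the edge $uv$. The exponential edge betweenness of an edge $uv$ is $b^{e}_{\lambda}(uv)=\sum_{\{k,l\}}\frac{s^{kl}_{uv}}{s^{kl}}\lambda^{d(k,l)}$ over all unordered pairs $\{k,l\}$ of distinct vertices; the exponential betweenness centrality of a vertex $u$ is $c^{e}_{\lambda}(u)=\sum_{v\in[u]}b^{e}_{\lambda}(uv)$; and $mc^{e}_{\lambda}(G)=\min\{c^{e}_{\lambda}(u):u\in V(G)\}$. *)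

(* Defs.v *)
From mathcomp Require Import all_boot all_order all_algebra.
Set Implicit Arguments. Unset Strict Implicit. Unset Printing Implicit Defensive.
Import Order.TTheory GRing.Theory Num.Theory.
Local Open Scope ring_scope.

Section Betweenness.
Variables (T : finType) (e : rel T).

Definition simple_graph := symmetric e /\ irreflexive e.
Definition connected_graph := forall x y : T, connect e x y.

(* walks of length m from k to l, given as m-tuples of the vertices after k *)
Definition walk_of (m : nat) (k l : T) (t : m.-tuple T) : bool :=
  path e k t && (last k t == l).

Definition has_walk (m : nat) (k l : T) : bool :=
  [exists t : m.-tuple T, walk_of k l t].

(* graph distance d(k,l): least length of a walk from k to l
   (in a connected graph it is < #|T|; returns #|T| if unreachable) *)
Definition dist (k l : T) : nat := find (fun m => has_walk m k l) (iota 0 #|T|).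

Definition shortest_paths (k l : T) : {set (dist k l).-tuple T} :=
  [set t | walk_of k l t].

Definition nsp (k l : T) : nat := #|shortest_paths k l|.

Definition uses_edge (u v k : T) (s : seq T) : bool :=
  has (fun p => (p == (u, v)) || (p == (v, u))) (zip (k :: s) s).

Definition nsp_edge (u v k l : T) : nat :=
  #|[set t in shortest_paths k l | uses_edge u v k t]|.

Variable R : realFieldType.
Variable lam : R.

(* exponential edge betweenness: sum over unordered pairs {k,l}, k <> l,
   each pair counted once via the enumeration order of T *)
Definition exp_edge_betweenness (u v : T) : R :=
  \sum_(k : T) \sum_(l : T | (enum_rank k < enum_rank l)%N)
     ((nsp_edge u v k l)%:R / (nsp k l)%:R) * lam ^+ dist k l.

Definition exp_centrality (u : T) : R :=
  \sum_(v : T | e u v) exp_edge_betweenness u v.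

(* minimum over all vertices (0 for the empty vertex set, never used) *)
Definition min_exp_centrality : R :=
  if [pick u : T] is Some u0 then
    \big[Num.min/exp_centrality u0]_(u : T) exp_centrality u
  else 0.

End Betweenness.

Definition complete_graph (n : nat) : rel 'I_n := fun i j => i != j.
Arguments complete_graph n : clear implicits.

(* Main.v *)
Require Import Defs.
From mathcomp Require Import all_boot all_order all_algebra.
From mathcomp Require Import ring lra zify.
Import Order.TTheory GRing.Theory Num.Theory.

Section P1.
Variables (T : finType) (e : rel T).

Lemma uses_le (k : T) (s : seq T) :
  (\sum_u \sum_v (uses_edge u v k s : nat) <= 2 * size s)%N.
Proof.
rewrite pair_bigA /=.
set L := zip (k :: s) s ++ [seq (p.2, p.1) | p <- zip (k :: s) s].
have -> : (\sum_(p : T * T) (uses_edge p.1 p.2 k s : nat))%N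
   = #|[pred p : T * T | uses_edge p.1 p.2 k s]|.
  rewrite -sum1_card [RHS]big_mkcond /=; apply: eq_bigr => p _.
  by rewrite inE; case: (uses_edge _ _ _ _).
apply: (@leq_trans #|[pred p | p \in L]|).
  apply: subset_leq_card; apply/subsetP => [[u v]]; rewrite !inE /= /uses_edge.
  case/hasP => p pin /orP [] /eqP pe; rewrite /L mem_cat; apply/orP.
    by left; rewrite -pe.
  right; apply/mapP; exists p => //; by rewrite pe.
apply: (leq_trans (card_size _)).
rewrite /L size_cat size_map size_zip /=. lia.
Qed.

Lemma card_setIdx (I : finType) (A : {set I}) (P : pred I) :
  #|[set t in A | P t]| = (\sum_(t in A) (P t : nat))%N.
Proof.
rewrite -sum1_card big_mkcond [RHS]big_mkcond /=; apply: eq_bigr => t _.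
by rewrite !inE; case: (t \in A); case: (P t).
Qed.

Lemma edge_sum_le (k l : T) :
  (\sum_u \sum_(v | e u v) nsp_edge e u v k l <= 2 * dist e k l * nsp e k l)%N.
Proof.
apply: (@leq_trans (\sum_u \sum_v nsp_edge e u v k l)).
  apply: leq_sum => u _; rewrite [X in (_ <= X)%N](bigID (fun v => e u v)) /=.
  exact: leq_addr.
under eq_bigr => u _ do under eq_bigr => v _ do rewrite /nsp_edge card_setIdx.
under eq_bigr => u _ do rewrite exchange_big /=.
rewrite exchange_big /=.
rewrite /nsp -sum1_card big_distrr /=.
apply: leq_sum => t _.
rewrite muln1; have := uses_le k t; by rewrite size_tuple.
Qed.
End P1.

Lemma pairs_count (T : finType) :
  (2 * \sum_(k : T) #|[pred l : T | (enum_rank k < enum_rank l)%N]| = #|T| * #|T|.-1)%N.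
Proof.
have E : forall k : T, #|[pred l : T | (enum_rank k < enum_rank l)%N]|
     = (\sum_(l : T) ((enum_rank k < enum_rank l)%N : nat))%N.
  move=> k; rewrite -(@sum1_card _ [pred l : T | (enum_rank k < enum_rank l)%N]) big_mkcond /=; apply: eq_bigr => l _.
  by rewrite inE; case: (_ < _)%N.
under eq_bigr => k _ do rewrite E.
rewrite mul2n -addnn {2}exchange_big -big_split /=.
rewrite -sum_nat_const; apply: eq_bigr => k _.
rewrite -big_split /= -(cardC1 k) -(@sum1_card _ (predC1 k)) [RHS]big_mkcond /=.
apply: eq_bigr => l _; rewrite !inE.
case: (ltngtP (enum_rank k) (enum_rank l)) => h.
- by have -> : (l != k) by apply/eqP => lk; move: h; rewrite lk ltnn.
- by have -> : (l != k) by apply/eqP => lk; move: h; rewrite lk ltnn.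
- by rewrite (enum_rank_inj (val_inj h)) eqxx.
Qed.
Local Open Scope ring_scope.

Section P3.
Variables (R : realFieldType) (lam : R).
Hypotheses (hl0 : 0 <= lam) (hl1 : lam < 2^-1).

Lemma pow_aux d : d.+1%:R * lam ^+ d <= 1.
Proof.
elim: d => [|d IH]; first by rewrite expr0 mulr1.
have hx : 0 <= lam ^+ d by exact: exprn_ge0.
rewrite exprS.
have h2 : 2 * lam < 1.
  have : (2:R) * 2^-1 = 1 by rewrite divff // pnatr_eq0.
  move: hl1; set h := (2:R)^-1 => hh hh2. nra.
have hd : 0 <= d%:R :> R by exact: ler0n.
have e1 : (d.+2)%:R = d%:R + 2 :> R by rewrite -addn2 natrD.
have e0 : (d.+1)%:R = d%:R + 1 :> R by rewrite -addn1 natrD.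
rewrite e1; rewrite e0 in IH.
have hz : 0 <= d%:R * lam ^+ d by exact: mulr_ge0.
have -> : (d%:R + 2) * (lam * lam ^+ d) = lam * (d%:R * lam ^+ d) + 2 * lam * lam ^+ d by ring.
rewrite mulrDl mul1r in IH.
move: hz IH hx; set z := d%:R * lam ^+ d; set x := lam ^+ d => hz IH hx.
have a1 : 0 <= lam * z by exact: mulr_ge0.
have a2 : 0 <= lam * (1 - z - x) by apply: mulr_ge0 => //; lra.
nra.
Qed.

Lemma pow_bound d : d%:R * lam ^+ d <= lam.
Proof.
case: d => [|d]; first by rewrite mul0r.
rewrite exprS mulrCA; have := pow_aux d.
have := exprn_ge0 d hl0; set x := lam ^+ d => hx h.
rewrite -[X in _ <= X]mulr1; apply: ler_wpM2l => //.
Qed.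

Lemma term_le (S N d : nat) : (S <= 2 * d * N)%N -> S%:R / N%:R * lam ^+ d <= 2 * lam.
Proof.
move=> h; have hx := exprn_ge0 d hl0.
case: (posnP N) => [->|Np].
  by rewrite invr0 mulr0 mul0r; apply: mulr_ge0.
apply: (@le_trans _ _ ((2 * d)%:R * lam ^+ d)).
  apply: ler_wpM2r => //; rewrite ler_pdivrMr ?ltr0n // -natrM ler_nat.
  done.
rewrite natrM -mulrA; apply: ler_wpM2l => //; exact: pow_bound.
Qed.

Lemma sum_cent (T : finType) (e : rel T) :
  \sum_u exp_centrality e lam u <= (#|T| * #|T|.-1)%:R * lam.
Proof.
rewrite /exp_centrality /exp_edge_betweenness.
under eq_bigr => u _ do (rewrite exchange_big /=; under eq_bigr => k _ do rewrite exchange_big /=).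
rewrite exchange_big /=.
under eq_bigr => k _ do rewrite exchange_big /=.
apply: le_trans.
  apply: ler_sum => k _; apply: ler_sum => l _.
  apply: (@le_trans _ _ (((\sum_u \sum_(v | e u v) nsp_edge e u v k l)%N)%:R / (nsp e k l)%:R * lam ^+ dist e k l)); last first.
    by apply: term_le; exact: edge_sum_le.
  rewrite natr_sum !mulr_suml; rewrite le_eqVlt; apply/orP; left; apply/eqP; apply: eq_bigr => u _.
  by rewrite natr_sum !mulr_suml.
rewrite /=.
under eq_bigr => k _ do rewrite sumr_const.
rewrite sumrMnr -(pairs_count T) natrM.
rewrite -[(2 * lam) *+ _]mulr_natr le_eqVlt; apply/orP; left; apply/eqP; rewrite [RHS]mulrAC.
reflexivity.
Qed.
End P3.

Section K.
Variable n : nat.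
Local Notation e := (complete_graph n).

Lemma has_walk0 (k l : 'I_n) : has_walk e 0 k l = (k == l).
Proof.
apply/existsP/eqP => [[t]|->].
  by rewrite tuple0 /walk_of /= => /eqP.
by exists [tuple]; rewrite /walk_of /=.
Qed.

Lemma has_walk1 (k l : 'I_n) : k != l -> has_walk e 1 k l.
Proof.
move=> kl; apply/existsP; exists [tuple l]; by rewrite /walk_of /= andbT eqxx andbT.
Qed.

Lemma distK (k l : 'I_n) : k != l -> dist e k l = 1%N.
Proof.
move=> kl; rewrite /dist card_ord.
have n2 : (1 < n)%N.
  case: n k l kl => [|[|n']] k l kl //; first by clear kl; case: k.
  by move: kl; rewrite (ord1 k) (ord1 l) eqxx.
have -> : iota 0 n = [:: 0, 1 & iota 2 (n - 2)]%N.
  by clear k l kl; case: n n2 => [|[|m]] //= _; rewrite subn2.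
by rewrite /= has_walk0 (negbTE kl) has_walk1.
Qed.

Lemma spK (k l : 'I_n) : k != l ->
  nsp e k l = 1%N /\
  forall u v, nsp_edge e u v k l = (((k, l) == (u, v)) || ((k, l) == (v, u)) : nat).
Proof.
move=> kl; rewrite /nsp /nsp_edge /shortest_paths.
have := distK _ _ kl; move: (dist e k l) => m hm; subst m.
have -> : [set t : 1.-tuple 'I_n | walk_of e k l t] = [set [tuple l]].
  apply/setP => t; rewrite !inE; case: t => [[|x [|y s]]] //= sz.
  rewrite -val_eqE /= /walk_of /= andbT eqseq_cons andbT.
  case: eqP => [->|_]; last by rewrite andbF.
  by rewrite andbT.
split; first by rewrite cards1.
move=> u v; rewrite card_setIdx big_set1 /uses_edge /=.
by rewrite orbF.
Qed.

Lemma count_pair (u v : 'I_n) : u != v ->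
  (\sum_(k : 'I_n) \sum_(l : 'I_n | (enum_rank k < enum_rank l)%N)
     (((k, l) == (u, v)) || ((k, l) == (v, u)) : nat))%N = 1%N.
Proof.
move=> uv; rewrite pair_big_dep /=.
case: (ltngtP (enum_rank u) (enum_rank v)) => h.
- rewrite (bigD1 (u, v)) /=; last by rewrite h.
  rewrite eqxx /= big1 ?addn0 // => -[k l] /= /andP [ckl ne].
  rewrite (negbTE ne) /=; case: eqP => // -[ek el]; subst k l.
  by move: (ltn_trans h ckl); rewrite ltnn.
- rewrite (bigD1 (v, u)) /=; last by rewrite h.
  rewrite eqxx orbT /= big1 ?addn0 // => -[k l] /= /andP [ckl ne].
  rewrite (negbTE ne) orbF; case: eqP => // -[ek el]; subst k l.
  by move: (ltn_trans h ckl); rewrite ltnn.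
- by move: uv; rewrite (enum_rank_inj (val_inj h)) eqxx.
Qed.
End K.

Section KR.
Variables (n : nat) (R : realFieldType) (lam : R).
Local Notation e := (complete_graph n).

Lemma ebK (u v : 'I_n) : u != v -> exp_edge_betweenness e lam u v = lam.
Proof.
move=> uv; rewrite /exp_edge_betweenness.
transitivity (\sum_(k : 'I_n) \sum_(l : 'I_n | (enum_rank k < enum_rank l)%N)
   ((((k, l) == (u, v)) || ((k, l) == (v, u)) : nat)%:R * lam)).
  apply: eq_bigr => k _; apply: eq_bigr => l ckl.
  have kl : k != l by apply/eqP => ekl; move: ckl; rewrite ekl ltnn.
  have [h1 h2] := spK _ _ _ kl.
  by rewrite h1 h2 (distK _ _ _ kl) divr1 expr1.
rewrite -[RHS]mul1r -[1 in RHS]/((1%N)%:R) -(count_pair _ _ _ uv) natr_sum mulr_suml; apply: eq_bigr => k _.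
by rewrite natr_sum mulr_suml.
Qed.

Lemma ecK (u : 'I_n) : exp_centrality e lam u = (n.-1)%:R * lam.
Proof.
rewrite /exp_centrality.
under eq_bigr => v uv do rewrite ebK //.
have hc : #|[pred v : 'I_n | u != v]| = n.-1.
  transitivity #|'I_n|.-1; last by rewrite card_ord.
  rewrite -(cardC1 u); apply: eq_card => v; rewrite !inE eq_sym.
  by [].
rewrite sumr_const -mulr_natl; rewrite -hc.
by rewrite mulr1 mulr_natl.
Qed.
End KR.

Theorem theorem7 (R : realFieldType) (lam : R) (hlam0 : 0 < lam) (hlam1 : lam < 2^-1) :
  (forall (T : finType) (e : rel T),
      simple_graph e -> connected_graph e -> (0 < #|T|)%N ->
      min_exp_centrality e lam <= (#|T|.-1)%:R * lam)
  /\
  (forall n : nat, (0 < n)%N ->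
      min_exp_centrality (complete_graph n) lam = (n.-1)%:R * lam /\
      (forall u : 'I_n, exp_centrality (complete_graph n) lam u = (n.-1)%:R * lam)).
Proof.
have hl0 : 0 <= lam by exact: ltW.
split.
- move=> T e _ _ n0.
  rewrite /min_exp_centrality; case: pickP => [u0 _|h]; last first.
    by case/card_gt0P: n0 => x _; have := h x.
  set m := \big[_/_]_u _.
  have hm : forall u, m <= exp_centrality e lam u by move=> u; exact: bigmin_le.
  have hs := sum_cent _ _ hl0 hlam1 _ e.
  have : m *+ #|T| <= (#|T| * #|T|.-1)%:R * lam.
    apply: le_trans hs.
    have <- : \sum_(u : T) m = m *+ #|T| by rewrite sumr_const.
    by apply: ler_sum => u _.
  rewrite natrM -mulrA -mulr_natl => H.
  rewrite -(@ler_pM2l _ (#|T|%:R)) ?ltr0n // mulr_natl. by rewrite mulr1 in H.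
- move=> n n0; split; last by move=> u; exact: ecK.
  rewrite /min_exp_centrality; case: pickP => [u0 _|h]; last by have := h (Ordinal n0).
  apply/le_anti/andP; split.
    by rewrite (le_trans (bigmin_le _ u0 _)) // ecK.
  by apply: le_bigmin => [|i _]; rewrite ecK.
Qed.
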